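(* Let $K\ge2$, $0<q<p$ with $p+(K-1)q=1$, and $\phi\in\Delta$. Suppose $\theta,\theta'\in\Delta$ differ only at two positions $j,k$, where $a:=\theta_j=\theta'_k<b:=\theta_k=\theta'_j$, and suppose $\phi_j<\phi_k$. Then $D_{KL}(\phi,\mathcal{M}(\theta))<D_{KL}(\phi,\mathcal{M}(\theta'))$.
   Context: $\Delta=\{\theta\in\mathbb{R}^K:\theta_i\ge0,\sum_i\theta_i=1\}$. $\mathcal{M}(\theta)_y=q+(p-q)\theta_y$. $D_{KL}(\phi,\psi)=\sum_i\phi_i\log(\phi_i/\psi_i)$ with $0\log(0/\cdot)=0$. *)

(* Defs.v *)
From mathcomp Require Import all_boot all_order all_algebra.
From mathcomp Require Import reals exp.
Set Implicit Arguments. Unset Strict Implicit. Unset Printing Implicit Defensive.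
Import Order.TTheory GRing.Theory Num.Theory.
Local Open Scope ring_scope.

Definition in_simplex (R : realType) (K : nat) (th : 'I_K -> R) : Prop :=
  (forall i, 0 <= th i) /\ \sum_(i < K) th i = 1.

Definition Mmap (R : realType) (K : nat) (p q : R) (th : 'I_K -> R) : 'I_K -> R :=
  fun y => q + (p - q) * th y.

Definition DKL (R : realType) (K : nat) (phi psi : 'I_K -> R) : R :=
  \sum_(i < K) (if phi i == 0 then 0 else phi i * ln (phi i / psi i)).

(* Main.v *)
Require Import Defs.
From mathcomp Require Import all_boot all_order all_algebra.
From mathcomp Require Import reals exp.
From mathcomp Require Import ring lra.
Import Order.TTheory GRing.Theory Num.Theory.
Local Open Scope ring_scope.


Lemma term_split (R : realType) (x y : R) : 0 <= x -> 0 < y ->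
  (if x == 0 then 0 else x * ln (x / y)) =
  (if x == 0 then 0 else x * ln x) - x * ln y.
Proof.
move=> x0 y0; have [->|xn0] := eqVneq x 0; first by rewrite mul0r subr0.
have xp : 0 < x by rewrite lt_def xn0 x0.
rewrite lnM ?posrE ?invr_gt0 // lnV ?posrE //. 
by rewrite mulrDr mulrN.
Qed.

Theorem lemma1 (R : realType) (K : nat) (p q : R) (phi th th' : 'I_K -> R)
  (j k : 'I_K) (a b : R) :
  (2 <= K)%N -> 0 < q -> q < p -> p + (K - 1)%:R * q = 1 ->
  in_simplex phi -> in_simplex th -> in_simplex th' ->
  (forall i, i != j -> i != k -> th i = th' i) ->
  th j = a -> th' k = a -> th k = b -> th' j = b -> a < b ->
  phi j < phi k ->
  DKL phi (Mmap p q th) < DKL phi (Mmap p q th').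
Proof.
move=> _ q0 qp _ [phi0 _] [th0 _] [th'0 _] eqo thj th'k thk th'j ab phijk.
have jk : j != k by apply/eqP => E; move: ab; rewrite -thj E thk ltxx.
have Mpos : forall t : 'I_K -> R, (forall i, 0 <= t i) -> forall i, 0 < Mmap p q t i.
  move=> t t0 i; rewrite /Mmap.
  have := t0 i; have : 0 < p - q by rewrite subr_gt0.
  move=> h1 h2; have := mulr_ge0 (ltW h1) h2; lra.
have kj : k != j by rewrite eq_sym.
rewrite /DKL (bigD1 j) //= [X in _ < X](bigD1 j) //=.
rewrite (bigD1 k) //= [X in _ < _ + X](bigD1 k) //=.
have -> : \sum_(i < K | (i != j) && (i != k))
    (if phi i == 0 then 0 else phi i * ln (phi i / Mmap p q th i)) =
  \sum_(i < K | (i != j) && (i != k))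
    (if phi i == 0 then 0 else phi i * ln (phi i / Mmap p q th' i)).
  by apply: eq_bigr => i /andP[ij ik]; rewrite /Mmap eqo.
rewrite !term_split ?Mpos //.
have A0 : 0 < q + (p - q) * a by have := Mpos _ th0 j; rewrite /Mmap thj.
have AB : q + (p - q) * a < q + (p - q) * b.
  by rewrite ltrD2l ltr_pM2l ?subr_gt0.
have B0 : 0 < q + (p - q) * b by apply: lt_trans AB.
have lnAB : ln (q + (p - q) * a) < ln (q + (p - q) * b) by rewrite ltr_ln.
rewrite /Mmap thj thk th'j th'k.
set u := ln (q + (p - q) * a) in lnAB *; set v := ln (q + (p - q) * b) in lnAB *.
have : 0 < (phi k - phi j) * (v - u) by apply: mulr_gt0; rewrite subr_gt0.
set cj := (if phi j == 0 then 0 else _); set ck := (if phi k == 0 then 0 else _).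
set S := \sum_(i < K | _) _.
move=> h; rewrite -subr_gt0; suff -> : cj - phi j * v + (ck - phi k * u + S) - (cj - phi j * u + (ck - phi k * v + S)) = (phi k - phi j) * (v - u) by [].
by ring.
Qed.
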